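(* Let $P^*$ and $\widehat P$ be transition kernels and $\pi_b,\pi$ policies satisfying the standing assumptions, and let $\mathcal G$ be any class of functions $g:\mathbb S\times\mathbb A\to\mathbb R$ with $\sup_{g\in\mathcal G}\|g\|_\infty<\infty$. Define $$\mathcal F:=\Big\{Q_g^{\pi,\widehat P}\;:\;g\in\mathcal G\Big\},$$ i.e. $f\in\mathcal F$ iff $f(s,a)=\mathbb E_{\pi,\widehat P}\big[\sum_{t=0}^\infty (g(s_t,a_t)-\hat\eta^\pi_g)\mid s_0=s,a_0=a\big]$ with $\hat\eta^\pi_g=\lim_{T\to\infty}\mathbb E_{\pi,\widehat P}\big[\frac1{T+1}\sum_{t=0}^T g(s_t,a_t)\big]$ for some $g\in\mathcal G$. Then $$D_{\mathcal G}\big(d_{\pi_b}^{P^*},d_{\pi}^{\widehat P}\big)=\mathcal R_{\mathcal F}(d_{\pi_b}^{P^*},\pi,\widehat P):=\sup_{f\in\mathcal F}\Big|\mathbb E_{(s,a)\sim d_{\pi_b}^{P^*}}[f(s,a)]-\mathbb E_{(s,a)\sim d_{\pi_b}^{P^*},\,s'\sim\widehat P(\cdot\mid s,a),\,a'\sim\pi(\cdot\mid s')}[f(s',a')]\Big|.$$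
   Context: Standing setting: finite state space $\mathbb S$ and finite action space $\mathbb A$. A transition kernel $P$ gives probabilities $P(s'\mid s,a)$; a (time-stationary Markov) policy $\pi$ gives probabilities $\pi(a\mid s)$. Standing assumption: for every kernel $P\in\{P^*,\widehat P\}$ and policy $\pi$ considered, the Markov chain on $\mathbb S\times\mathbb A$ with transitions $(s,a)\mapsto(s',a')$, $s'\sim P(\cdot\mid s,a)$, $a'\sim\pi(\cdot\mid s')$, is irreducible and aperiodic. Its unique stationary distribution is denoted $d_\pi^P(s,a)$ (so $d_\pi^P(s,a)=d_\pi^P(s)\pi(a\mid s)$ and $d^P_\pi(s',a')=\sum_{s,a}\pi(a'\mid s')P(s'\mid s,a)d^P_\pi(s,a)$). $P^*$ is the true dynamics, $\widehat P$ an estimated dynamics, $\pi_b$ the behavior policy. For a bounded ''reward'' $g:\mathbb S\times\mathbb A\to\mathbb R$, the average reward is $\eta^{\pi,P}_g=\mathbb E_{d_\pi^P}[g]=\lim_{T\to\infty}\mathbb E_{\pi,P}[\frac1{T+1}\sum_{t=0}^T g(s_t,a_t)]$, and the differential value function is $Q_g^{\pi,P}(s,a)=\mathbb E_{\pi,P}\big[\sum_{t=0}^\infty (g(s_t,a_t)-\eta^{\pi,P}_g)\mid s_0=s,a_0=a\big]$ (the series converges under the standing assumption), where $\mathbb E_{\pi,P}$ is over trajectories with $s_{t+1}\sim P(\cdot\mid s_t,a_t)$, $a_{t+1}\sim\pi(\cdot\mid s_{t+1})$. For a function class $\mathcal G$ and distributions $\mu,\nu$ on $\mathbb S\times\mathbb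 A$, the integral probability metric is $D_{\mathcal G}(\mu,\nu):=\sup_{g\in\mathcal G}\big|\mathbb E_{\mu}[g]-\mathbb E_{\nu}[g]\big|$. *)

(* Defs.v *)
From HB Require Import structures.
From mathcomp Require Import all_boot all_order all_algebra.
From mathcomp Require Import all_classical all_reals all_analysis.
Set Implicit Arguments. Unset Strict Implicit. Unset Printing Implicit Defensive.
Import Order.TTheory GRing.Theory Num.Theory.
Local Open Scope ring_scope.
Local Open Scope classical_set_scope.

Section MDP.
Variables (R : realType) (S A : finType).

(* transition trans_kernel P s a s' = P(s' | s, a) *)
Definition trans_kernel (P : S -> A -> S -> R) : Prop :=
  (forall s a s', 0 <= P s a s') /\ (forall s a, \sum_(s' : S) P s a s' = 1).

(* mdp_policy pi s a = pi(a | s) *)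
Definition mdp_policy (pi : S -> A -> R) : Prop :=
  (forall s a, 0 <= pi s a) /\ (forall s, \sum_(a : A) pi s a = 1).

Definition sa_trans (P : S -> A -> S -> R) (pi : S -> A -> R)
  (x y : S * A) : R := P x.1 x.2 y.1 * pi y.1 y.2.

Fixpoint sa_nstep (P : S -> A -> S -> R) (pi : S -> A -> R) (n : nat)
  (x y : S * A) : R :=
  match n with
  | 0 => (x == y)%:R
  | n.+1 => \sum_(z : S * A) sa_nstep P pi n x z * sa_trans P pi z y
  end.

Definition sa_irreducible (P : S -> A -> S -> R) (pi : S -> A -> R) : Prop :=
  forall x y : S * A, exists n, 0 < sa_nstep P pi n x y.

(* every state has period 1: the gcd of its return times
   {n >= 1 | P^n(x,x) > 0} is 1, i.e. no d > 1 divides all of them *)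
Definition sa_aperiodic (P : S -> A -> S -> R) (pi : S -> A -> R) : Prop :=
  forall x : S * A, forall d : nat, (1 < d)%N ->
    ~ (forall n : nat, (0 < n)%N -> 0 < sa_nstep P pi n x x -> (d %| n)%N).

Definition sa_stationary (P : S -> A -> S -> R) (pi : S -> A -> R)
  (d : S * A -> R) : Prop :=
  (forall x, 0 <= d x) /\ \sum_(x : S * A) d x = 1 /\
  (forall y : S * A,
     d y = \sum_(x : S * A) pi y.1 y.2 * P x.1 x.2 y.1 * d x).

Definition expect (d : S * A -> R) (g : S * A -> R) : R :=
  \sum_(x : S * A) d x * g x.

(* average reward eta_g^{pi,P} = E_{d_pi^P}[g] (d the sa_stationary dist.) *)
Definition avg_reward (d : S * A -> R) (g : S * A -> R) : R := expect d g.

Definition cond_exp_t (P : S -> A -> S -> R) (pi : S -> A -> R) (t : nat)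
  (g : S * A -> R) (x : S * A) : R :=
  \sum_(y : S * A) sa_nstep P pi t x y * g y.

Definition Qfun (P : S -> A -> S -> R) (pi : S -> A -> R) (d : S * A -> R)
  (g : S * A -> R) (x : S * A) : R :=
  limn (series (fun t : nat => (cond_exp_t P pi t g x - avg_reward d g : R^o))).

Definition IPM (G : set (S * A -> R)) (mu nu : S * A -> R) : R :=
  sup [set r : R | exists2 g, G g & r = `|expect mu g - expect nu g|].

Definition RF (F : set (S * A -> R)) (mu : S * A -> R)
  (pi : S -> A -> R) (P : S -> A -> S -> R) : R :=
  sup [set r : R | exists2 f, F f &
     r = `|expect mu f -
           \sum_(x : S * A) mu x *
             \sum_(s' : S) P x.1 x.2 s' * \sum_(a' : A) pi s' a' * f (s', a')|].

End MDP.

(* Main.v *)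
Require Import Defs.
From HB Require Import structures.
From mathcomp Require Import all_boot all_order all_algebra.
From mathcomp Require Import all_classical all_reals all_analysis.
From mathcomp Require Import zify ring lra.
Import Order.TTheory GRing.Theory Num.Theory.
Local Open Scope ring_scope.
Local Open Scope classical_set_scope.
Set Implicit Arguments. Unset Strict Implicit. Unset Printing Implicit Defensive.
Section Markov.
Variables (R : realType) (S A : finType) (P : S -> A -> S -> R) (pi : S -> A -> R).
Hypothesis HP : trans_kernel P.
Hypothesis Hpi : mdp_policy pi.
Local Notation T := (sa_trans P pi).
Local Notation Tn := (sa_nstep P pi).

Lemma T_ge0 x y : 0 <= T x y.
Proof. rewrite /sa_trans; apply: mulr_ge0; [apply HP | apply Hpi]. Qed.

Lemma T_sum1 x : \sum_y T x y = 1.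
Proof.
rewrite /sa_trans -(pair_big predT predT (fun s a => P x.1 x.2 s * pi s a)) /=.
rewrite -[RHS](proj2 HP x.1 x.2); apply: eq_bigr => s _.
by rewrite -mulr_sumr (proj2 Hpi s) mulr1.
Qed.

Lemma Tn_ge0 n x y : 0 <= Tn n x y.
Proof.
elim: n y => [|n IH] y /=; first by case: (x == y).
by apply: sumr_ge0 => z _; apply: mulr_ge0 => //; apply: T_ge0.
Qed.

Lemma Tn_sum1 n x : \sum_y Tn n x y = 1.
Proof.
elim: n => [|n IH] /=.
  by rewrite (bigD1 x) //= eqxx big1 ?addr0 // => y /negbTE; rewrite eq_sym => ->.
rewrite exchange_big /= -[RHS]IH; apply: eq_bigr => z _.
by rewrite -mulr_sumr T_sum1 mulr1.
Qed.

Lemma Tn_add m n x y : Tn (m + n) x y = \sum_z Tn m x z * Tn n z y.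
Proof.
elim: n y => [|n IH] y /=.
  rewrite addn0 (bigD1 y) //= eqxx mulr1 big1 ?addr0 // => z /negbTE ->.
  by rewrite mulr0.
rewrite addnS /=.
under eq_bigr => z _ do rewrite IH mulr_suml.
rewrite exchange_big /=; apply: eq_bigr => w _.
by rewrite mulr_sumr; apply: eq_bigr => z _; rewrite mulrA.
Qed.

Lemma Tn1 x y : Tn 1 x y = T x y.
Proof.
rewrite /= (bigD1 x) //= eqxx mul1r big1 ?addr0 // => z /negbTE.
by rewrite eq_sym => ->; rewrite mul0r.
Qed.

Lemma sum_ge_term (X : finType) (f : X -> R) z :
  (forall y, 0 <= f y) -> f z <= \sum_y f y.
Proof.
move=> h; rewrite (bigD1 z) //= lerDl; apply: sumr_ge0 => y _; exact: h.
Qed.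

Lemma Tn_add_ge m n x w y : Tn m x w * Tn n w y <= Tn (m + n) x y.
Proof.
rewrite Tn_add; apply: (@sum_ge_term _ (fun z => Tn m x z * Tn n z y) w) => z.
by apply: mulr_ge0; apply: Tn_ge0.
Qed.

Lemma Tn_add_gt0 m n x w y : 0 < Tn m x w -> 0 < Tn n w y -> 0 < Tn (m + n) x y.
Proof.
move=> h1 h2; apply: lt_le_trans (Tn_add_ge m n x w y); exact: mulr_gt0.
Qed.

End Markov.
Section Prim.
Variables (R : realType) (S A : finType) (P : S -> A -> S -> R) (pi : S -> A -> R).
Hypothesis HP : trans_kernel P.
Hypothesis Hpi : mdp_policy pi.
Local Notation Tn := (sa_nstep P pi).

Lemma R0_0 x : 0 < Tn 0 x x.
Proof. by rewrite /= eqxx ltr01. Qed.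

Lemma R0_mul x k a : 0 < Tn a x x -> 0 < Tn (k * a) x x.
Proof.
move=> h; elim: k => [|k IH]; first exact: R0_0.
by rewrite mulSn; apply: (Tn_add_gt0 HP Hpi h IH).
Qed.

Lemma eventually_pos x : sa_aperiodic P pi ->
  exists K, forall n, (K <= n)%N -> 0 < Tn n x x.
Proof.
move=> hap.
pose D g := exists a b, [/\ 0 < Tn a x x, 0 < Tn b x x & a = (b + g)%N].
have step : forall g, (0 < g)%N -> D g -> D 1%N.
  move=> g; elim/ltn_ind: g => g IH g0 [a [b [ha hb ab]]].
  have [g1e|g1] := eqVneq g 1%N; first by subst g; exists a, b.
  have g1' : (1 < g)%N by lia.
  have [n [n0 hn ndv]] : exists n, [/\ (0 < n)%N, 0 < Tn n x x & ~~ (g %| n)%N].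
    apply: contrapT => hno; apply: (hap x g g1') => n n0 hn.
    apply: contrapT => /negP ndv; apply: hno; by exists n.
  set q := (n %/ g)%N; set r := (n %% g)%N.
  have r0 : (0 < r)%N by rewrite lt0n; move: ndv; rewrite /dvdn.
  have rg : (r < g)%N by rewrite /r ltn_mod; lia.
  apply: (IH r rg r0); exists (n + q * b)%N, (q * a)%N; split.
  - by apply: (Tn_add_gt0 HP Hpi hn); apply: R0_mul.
  - exact: R0_mul.
  - have := divn_eq n g; rewrite -/q -/r ab; lia.
have [n [n0 hn]] : exists n, (0 < n)%N /\ 0 < Tn n x x.
  apply: contrapT => hno; apply: (hap x 2%N isT) => n n0 hn.
  by exfalso; apply: hno; exists n.
have [a [b [ha hb ab]]] := step n n0 (ex_intro _ n (ex_intro _ 0%N (And3 hn (R0_0 x) (esym (add0n n))))).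
exists (b * b)%N => m hm.
have [b0|bpos] := eqVneq b 0%N.
  subst b; rewrite -(muln1 m); apply: R0_mul; by rewrite ab add0n in ha.
set q := (m %/ b)%N; set r := (m %% b)%N.
have qb : (b <= q)%N by rewrite /q leq_divRL ?lt0n.
have rb : (r < b)%N by rewrite /r ltn_mod lt0n.
have -> : m = ((q - r) * b + r * a)%N.
  have := divn_eq m b; rewrite -/q -/r ab; nia.
apply: (Tn_add_gt0 HP Hpi); apply: R0_mul => //.
Qed.

Lemma primitive : sa_irreducible P pi -> sa_aperiodic P pi ->
  exists N, (0 < N)%N /\ forall x y, 0 < Tn N x y.
Proof.
move=> hirr hap.
have [K HK] := choice (fun x => eventually_pos x hap).
have [m Hm] := choice (fun p : (S * A) * (S * A) => hirr p.1 p.2).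
pose MK := (\max_x K x)%N. pose Mm := (\max_(p : (S * A) * (S * A)) m p)%N.
exists (MK + Mm).+1; split => // x y.
have hK : (K x <= MK)%N by apply: (leq_bigmax x).
have hm : (m (x, y) <= Mm)%N by apply: (leq_bigmax (x, y)).
have -> : (MK + Mm).+1 = ((MK + Mm).+1 - m (x, y) + m (x, y))%N by lia.
apply: (Tn_add_gt0 HP Hpi _ (Hm (x, y))); apply: HK; lia.
Qed.

End Prim.
Section Helpers.
Variable R : realType.

Lemma wsum_bounds (X : finType) (Pr : pred X) (q f : X -> R) lo hi :
  (forall y, 0 <= q y) -> (forall y, lo <= f y <= hi) ->
  (\sum_(y | Pr y) q y) * lo <= \sum_(y | Pr y) q y * f y /\
  \sum_(y | Pr y) q y * f y <= (\sum_(y | Pr y) q y) * hi.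
Proof.
move=> q0 hf; rewrite !mulr_suml; split; apply: ler_sum => y _;
  apply: ler_wpM2l => //; by case/andP: (hf y).
Qed.

Lemma convex_bounds (X : finType) (p f : X -> R) lo hi :
  (forall y, 0 <= p y) -> \sum_y p y = 1 -> (forall y, lo <= f y <= hi) ->
  lo <= \sum_y p y * f y <= hi.
Proof.
move=> p0 p1 hf; have [] := wsum_bounds predT p0 hf.
by rewrite p1 !mul1r => -> ->.
Qed.

Lemma contraction (X : finType) (p f : X -> R) (y0 : X) eps lo hi :
  (forall y, 0 <= p y) -> \sum_y p y = 1 -> eps <= p y0 ->
  (forall y, lo <= f y <= hi) ->
  eps * f y0 + (1 - eps) * lo <= \sum_y p y * f y /\
  \sum_y p y * f y <= eps * f y0 + (1 - eps) * hi.
Proof.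
move=> p0 p1 ep hf.
have [l1 u1] := wsum_bounds (fun y => y != y0) p0 hf.
move: p1; rewrite (bigD1 y0) //= => p1.
rewrite (bigD1 y0) //=.
have /andP[lo0 hi0] := hf y0.
have : 0 <= (p y0 - eps) * (f y0 - lo) by apply: mulr_ge0; rewrite subr_ge0.
have : 0 <= (p y0 - eps) * (hi - f y0) by apply: mulr_ge0; rewrite subr_ge0.
set w := \sum_(y | y != y0) p y in l1 u1 p1.
set s := \sum_(y | y != y0) p y * f y in l1 u1 *.
have wE : w = 1 - p y0 by rewrite -p1 addrAC subrr add0r.
rewrite wE in l1 u1.
move=> h1 h2; split; nra.
Qed.

Lemma eps_lower (X : finType) (f : X -> R) :
  (forall x, 0 < f x) -> exists eps, 0 < eps /\ forall x, eps <= f x.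
Proof.
move=> fpos; have S0 : 0 <= \sum_x (f x)^-1.
  by apply: sumr_ge0 => x _; rewrite invr_ge0 ltW.
exists (1 + \sum_x (f x)^-1)^-1; split; first by rewrite invr_gt0; lra.
move=> x; rewrite -[X in _ <= X](invrK (f x)) lef_pV2 ?posrE ?invr_gt0 //; last lra.
have : (f x)^-1 <= \sum_x (f x)^-1.
  by apply: (@sum_ge_term R X (fun x => (f x)^-1) x) => y; rewrite invr_ge0 ltW.
lra.
Qed.

End Helpers.
Section Conv.
Variables (R : realType) (S A : finType) (P : S -> A -> S -> R) (pi : S -> A -> R).
Hypothesis HP : trans_kernel P.
Hypothesis Hpi : mdp_policy pi.
Variable d : S * A -> R.
Hypothesis Hd : sa_stationary P pi d.
Variable g : S * A -> R.
Local Notation Tn := (sa_nstep P pi).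
Local Notation T := (sa_trans P pi).
Local Notation eta := (avg_reward d g).

Definition hh t x := cond_exp_t P pi t g x - eta.

Lemma hh_eq t x : hh t x = \sum_y Tn t x y * (g y - eta).
Proof.
rewrite /hh /cond_exp_t; under [RHS]eq_bigr do rewrite mulrBr.
by rewrite sumrB -mulr_suml Tn_sum1 // mul1r.
Qed.

Lemma hh_shift m t x : hh (m + t) x = \sum_z Tn m x z * hh t z.
Proof.
rewrite hh_eq; under eq_bigr do rewrite Tn_add mulr_suml.
rewrite exchange_big /=; apply: eq_bigr => z _.
by rewrite hh_eq mulr_sumr; apply: eq_bigr => y _; rewrite mulrA.
Qed.

Lemma stat_n t y : \sum_x d x * Tn t x y = d y.
Proof.
elim: t y => [|t IH] y /=.
  rewrite (bigD1 y) //= eqxx mulr1 big1 ?addr0 // => x /negbTE ->.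
  by rewrite mulr0.
under eq_bigr do rewrite mulr_sumr.
rewrite exchange_big /= [RHS](proj2 (proj2 Hd)); apply: eq_bigr => z _.
by rewrite -(IH z) mulr_sumr; apply: eq_bigr => x _; rewrite /sa_trans; ring.
Qed.

Lemma mean0 t : \sum_x d x * hh t x = 0.
Proof.
under eq_bigr do rewrite hh_eq mulr_sumr.
rewrite exchange_big /=.
have E : forall y, \sum_x d x * (Tn t x y * (g y - eta)) = d y * (g y - eta).
  by move=> y; rewrite -(stat_n t y) mulr_suml; apply: eq_bigr => x _; rewrite mulrA.
under eq_bigr do rewrite E.
under eq_bigr do rewrite mulrBr.
rewrite sumrB -mulr_suml (proj1 (proj2 Hd)) mul1r.
by rewrite /avg_reward /expect subrr.
Qed.

Variable N : nat.
Hypothesis N0 : (0 < N)%N.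
Hypothesis HN : forall x y, 0 < Tn N x y.
Variable x0 : S * A.

Lemma Tn_le1 n x y : Tn n x y <= 1.
Proof.
rewrite -(Tn_sum1 HP Hpi n x); apply: (@sum_ge_term R _ (fun y => Tn n x y) y).
by move=> z; apply: Tn_ge0.
Qed.

Lemma conv_main : cvgn (series (fun t : nat => (hh t x0 : R^o))).
Proof.
have [eps [e0 he]] := eps_lower (fun x => HN x x0).
have e1 : eps <= 1 by apply: le_trans (he x0) (Tn_le1 _ _ _).
set c := 1 - eps.
have c0 : 0 <= c by rewrite /c subr_ge0.
set B := \sum_y `|g y - eta|.
have gB : forall y, - B <= g y - eta <= B.
  move=> y; rewrite -ler_norml.
  by apply: (@sum_ge_term R _ (fun y => `|g y - eta|) y) => z.
have width : forall j k, exists lo hi, hi - lo <= (B *+ 2) * c ^+ k /\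
    forall y, lo <= hh (k * N + j) y <= hi.
  move=> j; elim=> [|k [lo [hi [w hb]]]].
    exists (- B), B; split; first by rewrite expr0 mulr1 opprK mulr2n.
    move=> y; rewrite mul0n add0n hh_eq.
    apply: convex_bounds => //; [by move=> z; apply: Tn_ge0 | exact: Tn_sum1].
  exists (eps * hh (k * N + j) x0 + (1 - eps) * lo),
         (eps * hh (k * N + j) x0 + (1 - eps) * hi); split.
    rewrite exprS mulrCA -/c.
    have : c * (hi - lo) <= c * ((B *+ 2) * c ^+ k) by apply: ler_wpM2l.
    rewrite /c; lra.
  move=> y; rewrite mulSn -addnA (hh_shift N).
  have [l u] := contraction (p := fun z => Tn N y z) (f := hh (k * N + j)) (y0 := x0)
    (fun z => Tn_ge0 HP Hpi N y z) (Tn_sum1 HP Hpi N y) (he y) hb.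
  by rewrite l u.
have absb : forall j k y, `|hh (k * N + j) y| <= (B *+ 2) * c ^+ k.
  move=> j k y; have [lo [hi [w hb]]] := width j k.
  have /andP[m1 m2] := convex_bounds (proj1 Hd) (proj1 (proj2 Hd)) hb.
  rewrite mean0 in m1 m2.
  have /andP[h1 h2] := hb y.
  rewrite ler_norml; apply/andP; split; lra.
have sumb : forall k, eps * \sum_(0 <= t < k * N) `|hh t x0| <=
    N%:R * (B *+ 2) * (1 - c ^+ k).
  elim=> [|k IH]; first by rewrite mul0n big_geq // expr0 subrr !mulr0.
  rewrite mulSn addnC (@big_cat_nat _ _ _ (k * N)) //=; last by lia.
  have : \sum_(k * N <= i < k * N + N) `|hh i x0| <= ((B *+ 2) * c ^+ k) *+ N.
    rewrite -[X in _ *+ X](addKn (k * N)) -sumr_const_nat.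
    apply: ler_sum_nat => i /andP[i1 i2].
    by rewrite (_ : i = k * N + (i - k * N))%N ?absb //; lia.
  rewrite exprS -/c -mulr_natl.
  have : 0 <= N%:R * ((B *+ 2) * c ^+ k) by apply: mulr_ge0; [apply: ler0n | apply: mulr_ge0; [rewrite mulrn_wge0 //; apply: sumr_ge0 | apply: exprn_ge0]].
  rewrite /c in IH *; nra.
apply: normed_cvg; apply: nondecreasing_is_cvgn.
  apply: (@nondecreasing_series R (fun t => `|(hh t x0 : R^o)|) predT 0) => n _ _.
  exact: normr_ge0.
exists (N%:R * (B *+ 2) / eps) => _ [n _ <-] /=.

rewrite /series /= ler_pdivlMr // mulrC.
apply: (@le_trans _ _ (eps * \sum_(0 <= t < n * N) `|hh t x0|)).
  apply: ler_wpM2l; first exact: ltW.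
  rewrite (@big_cat_nat _ _ _ n 0 (n * N)) //=; last by rewrite leq_pmulr.
  by rewrite lerDl; apply: sumr_ge0 => i _; apply: normr_ge0.
apply: le_trans (sumb n) _.
rewrite -[X in _ <= X]mulr1; apply: ler_wpM2l.
  by apply: mulr_ge0; [apply: ler0n | rewrite mulrn_wge0 //; apply: sumr_ge0].
by rewrite gerBl exprn_ge0.
Qed.
End Conv.
Lemma cvg_finsum (R : realType) (X : finType) (u : X -> nat -> R^o) (l : X -> R^o) :
  (forall y, u y @ \oo --> l y) ->
  (fun n => \sum_y u y n) @ \oo --> \sum_y l y.
Proof.
move=> h; elim: (index_enum X) => [|y r IH].
  under eq_fun do rewrite big_nil; rewrite big_nil; exact: cvg_cst.
under eq_fun do rewrite big_cons; rewrite big_cons; exact: cvgD.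
Qed.

Section Bell.
Variables (R : realType) (S A : finType) (P : S -> A -> S -> R) (pi : S -> A -> R).
Hypothesis HP : trans_kernel P.
Hypothesis Hpi : mdp_policy pi.
Variable d : S * A -> R.
Variable g : S * A -> R.
Local Notation T := (sa_trans P pi).

Lemma bellman x : (forall y, cvgn (series (fun t : nat => (hh P pi d g t y : R^o)))) ->
  Qfun P pi d g x = hh P pi d g 0 x + \sum_y T x y * Qfun P pi d g y.
Proof.
move=> hc.
have E : forall n, series (fun t : nat => (hh P pi d g t x : R^o)) n.+1 =
    hh P pi d g 0 x + \sum_y T x y * series (fun t : nat => (hh P pi d g t y : R^o)) n.
  move=> n; rewrite /series /= big_nat_recl //; congr (_ + _).
  under eq_bigr do rewrite -add1n (hh_shift HP Hpi).
  rewrite exchange_big /=; apply: eq_bigr => y _; rewrite mulr_sumr.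
  by apply: eq_bigr => i _; congr (_ * _); exact: Tn1.
have c2 : (fun n => series (fun t : nat => (hh P pi d g t x : R^o)) n.+1) @ \oo -->
    (hh P pi d g 0 x + \sum_y T x y * Qfun P pi d g y : R^o).
  rewrite (funext E); apply: cvgD; first exact: cvg_cst.
  apply: cvg_finsum => y; apply: cvgMr; exact: hc y.
rewrite (cvg_shiftS (fun n => series (fun t : nat => (hh P pi d g t x : R^o)) n)) in c2.
exact: (cvg_lim _ c2).
Qed.
End Bell.
Lemma inner_eq (R : realType) (S A : finType) (P : S -> A -> S -> R) (pi : S -> A -> R)
  (f : S * A -> R) x :
  \sum_(s' : S) P x.1 x.2 s' * \sum_(a' : A) pi s' a' * f (s', a') =
  \sum_y sa_trans P pi x y * f y.
Proof.
rewrite [RHS](eq_bigr (fun p : S * A => sa_trans P pi x (p.1, p.2) * f (p.1, p.2))); last by case.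
rewrite -(pair_bigA _ (fun s a => sa_trans P pi x (s, a) * f (s, a))) /=.
apply: eq_bigr => s _; rewrite mulr_sumr; apply: eq_bigr => a _.
by rewrite /sa_trans /= mulrA.
Qed.

Theorem theorem3p1 (R : realType) (S A : finType)
  (Pstar Phat : S -> A -> S -> R) (pib pi : S -> A -> R)
  (dbstar dhat : S * A -> R) (G : set (S * A -> R)) :
  trans_kernel Pstar -> trans_kernel Phat -> mdp_policy pib -> mdp_policy pi ->
  sa_irreducible Pstar pib -> sa_aperiodic Pstar pib ->
  sa_irreducible Pstar pi -> sa_aperiodic Pstar pi ->
  sa_irreducible Phat pib -> sa_aperiodic Phat pib ->
  sa_irreducible Phat pi -> sa_aperiodic Phat pi ->
  sa_stationary Pstar pib dbstar -> sa_stationary Phat pi dhat ->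
  (exists M : R, forall g, G g -> forall x, `|g x| <= M) ->
  IPM G dbstar dhat =
  RF [set f | exists2 g, G g & f = Qfun Phat pi dhat g] dbstar pi Phat.
Proof.
move=> _ HP _ Hpi _ _ _ _ _ _ hirr hap Hdb Hd _.
have [N [N0 HN]] := primitive HP Hpi hirr hap.
have key : forall g, expect dbstar (Qfun Phat pi dhat g) -
    \sum_(x : S * A) dbstar x *
      \sum_(s' : S) Phat x.1 x.2 s' * \sum_(a' : A) pi s' a' * Qfun Phat pi dhat g (s', a')
    = expect dbstar g - expect dhat g.
  move=> g.
  have hc : forall y, cvgn (series (fun t : nat => (hh Phat pi dhat g t y : R^o))) := fun y => conv_main HP Hpi Hd (g:=g) N0 HN (x0:=y).
  under eq_bigr do rewrite inner_eq.
  rewrite /expect -sumrB.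
  under eq_bigr => x _ do rewrite -mulrBr (bellman HP Hpi x hc) addrK.
  rewrite /hh /cond_exp_t /=.
  under eq_bigr => x _ do rewrite mulrBr.
  rewrite sumrB -mulr_suml (proj1 (proj2 Hdb)) mul1r /avg_reward /expect.
  congr (_ - _); apply: eq_bigr => x _; congr (_ * _).
  rewrite (bigD1 x) //= eqxx mul1r big1 ?addr0 // => y /negbTE.
  by rewrite eq_sym => ->; rewrite mul0r.
rewrite /IPM /RF; congr sup; apply/seteqP; split => r /=.
  move=> [g Gg ->]; exists (Qfun Phat pi dhat g); first by exists g.
  by rewrite key.
move=> [f [g Gg ->] ->]; exists g => //; by rewrite key.
Qed.
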